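(* For every integer $n \geqslant 5$, the line graph $L(K_n)$ of the complete graph $K_n$ is not representable.
   Context: All graphs are finite and simple. For a word $W$ over an alphabet, two distinct letters $x,y$ alternate in $W$ if both occur in $W$ and, after erasing all other letters from $W$, one obtains a word of the form $xyxy\ldots$ or $yxyx\ldots$ (an alternating word of any length). A graph $G=(V,E)$ is representable if there exists a word $W$ over the alphabet $V$ in which every vertex occurs, such that for all distinct $x,y\in V$, the letters $x$ and $y$ alternate in $W$ if and only if $(x,y)\in E$. The line graph $L(G)$ of a graph $G$ has the edges of $G$ as vertices, two of them being adjacent in $L(G)$ iff they share an endpoint in $G$. *)

(* Defs.v *)
From mathcomp Require Import all_boot.
Set Implicit Arguments. Unset Strict Implicit. Unset Printing Implicit Defensive.

(* A finite simple graph is given by a vertex finType T and an adjacency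
   relation e : rel T (symmetric, irreflexive). *)

Definition alternate (T : eqType) (W : seq T) (x y : T) : Prop :=
  x \in W /\ y \in W /\
  exists a b : T, ((a == x) && (b == y) || (a == y) && (b == x)) /\
    let s := [seq z <- W | (z == x) || (z == y)] in
    s = [seq (if odd i then b else a) | i <- iota 0 (size s)].

Definition representable (T : finType) (e : rel T) : Prop :=
  exists W : seq T, (forall v : T, v \in W) /\
    forall x y : T, x != y -> (alternate W x y <-> e x y).

Definition K_rel (n : nat) : rel 'I_n := fun x y => x != y.
Arguments K_rel n : clear implicits.

Definition is_edge (T : finType) (e : rel T) (A : {set T}) : bool :=
  [exists x, exists y, [&& x != y, e x y & A == [set x; y]]].

Definition edge_type (T : finType) (e : rel T) := {A : {set T} | is_edge e A}.

Definition line_rel (T : finType) (e : rel T) : rel (edge_type e) :=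
  fun A B => (A != B) && (val A :&: val B != set0).
Arguments line_rel {T} e A B.

(* Main.v *)
Require Import Defs.
From mathcomp Require Import all_boot zify.
Set Implicit Arguments. Unset Strict Implicit. Unset Printing Implicit Defensive.

Definition prl : seq (nat * nat) := [:: (0,1); (0,2); (0,3); (1,2); (1,3); (2,4); (3,4)].
Definition pr (i : nat) := nth (0,1) prl i.
Definition shareN (i j : nat) :=
  let p := pr i in let q := pr j in
  [|| p.1 == q.1, p.1 == q.2, p.2 == q.1 | p.2 == q.2].
Definition adjN i j := (i != j) && shareN i j.
Definition V7 := iota 0 7.
Definition ELs : seq (nat * nat) :=
  [:: (0,1); (0,2); (0,3); (0,4); (1,2); (1,3); (1,5); (2,4); (2,6); (3,4); (3,5); (4,6); (5,6)].
Definition Ob (bs : seq bool) (i j : nat) : bool :=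
  if i == j then true else if adjN i j then
    (if (i, j) \in ELs then nth false bs (index (i, j) ELs) else ~~ nth false bs (index (j, i) ELs))
  else false.
Definition good (o : nat -> nat -> bool) :=
  all (fun a => all (fun b => if (a != b) && o a b then all (fun c =>
     if o b c then ~~ o c a &&
        all (fun d => if o c d && o a d then o a c && o b d else true) V7
     else true) V7 else true) V7) V7.
Definition tbl (bs : seq bool) := [seq [seq Ob bs i j | j <- V7] | i <- V7].
Definition lk (t : seq (seq bool)) i j := nth false (nth [::] t i) j.
Fixpoint allbits (n : nat) : seq (seq bool) :=
  if n is n'.+1 then [seq b :: s | b <- [:: true; false], s <- allbits n'] else [:: [::]].
Lemma all_bad : all (fun bs => ~~ good (lk (tbl bs))) (allbits 13).
Proof. vm_compute. reflexivity. Qed.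

Lemma allbitsP n s : size s = n -> s \in allbits n.
Proof.
elim: n s => [|n IH] [|b s] // [] hs.
rewrite [allbits _]/=.
by case: b; rewrite !mem_cat (map_f _ (IH s hs)) ?orbT.
Qed.

Lemma memEL : all (fun i => all (fun j => adjN i j ==> ((i,j) \in ELs) || ((j,i) \in ELs)) V7) V7.
Proof. by vm_compute. Qed.

Lemma finite_contra (o : nat -> nat -> bool) :
  (forall i, o i i) ->
  (forall i j, i < 7 -> j < 7 -> adjN i j -> o i j || o j i) ->
  (forall i j, i < 7 -> j < 7 -> i != j -> ~~ adjN i j -> ~~ o i j) ->
  (forall i j, i < 7 -> j < 7 -> i != j -> ~~ (o i j && o j i)) ->
  (forall a b c, a < 7 -> b < 7 -> c < 7 -> a != b -> o a b -> o b c -> o c a -> False) ->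
  (forall a b c d, o a b -> o b c -> o c d -> o a d -> o a c && o b d) ->
  False.
Proof.
move=> H0 H1 H2 H3 H4 H5.
pose bs := [seq o p.1 p.2 | p <- ELs].
have Hbs : bs \in allbits 13 by apply: allbitsP; rewrite size_map.
have E : forall i j, i < 7 -> j < 7 -> lk (tbl bs) i j = o i j.
  move=> i j hi hj.
  rewrite /lk /tbl (nth_map 0) ?size_iota // (nth_map 0) ?size_iota // !nth_iota //.
  rewrite /Ob /= !add0n.
  have hnth : forall p, p \in ELs -> nth false bs (index p ELs) = o p.1 p.2.
    move=> p hp; rewrite (nth_map (0,0)) ?index_mem // nth_index //.
  case: eqP => [->|/eqP ij]; first by rewrite H0.
  case hadj: (adjN i j); last first.
    by apply/esym/negbTE; apply: H2 => //; rewrite hadj.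
  have := allP memEL i; rewrite mem_iota => /(_ hi) /allP /(_ j).
  rewrite mem_iota => /(_ hj); rewrite hadj /=.
  case: ifP => [hij _|_ hji]; first by rewrite hnth.
  rewrite hnth //=.
  have := H1 i j hi hj hadj; have := H3 i j hi hj ij.
  by case: (o i j); case: (o j i).
have := allP all_bad bs Hbs; apply/negP/negPn.
apply/allP => a; rewrite mem_iota => /andP[_ ha].
apply/allP => b; rewrite mem_iota => /andP[_ hb].
rewrite (E a b) //; case: ifP => // /andP[ab oab].
apply/allP => c; rewrite mem_iota => /andP[_ hc].
rewrite (E b c) // (E c a) //; case: ifP => // obc.
apply/andP; split.
  by apply/negP => oca; apply: (H4 a b c).
apply/allP => d; rewrite mem_iota => /andP[_ hd].
rewrite (E c d) // (E a d) // (E a c) // (E b d) //.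
case: ifP => // /andP[ocd oad]; exact: H5.
Qed.
Section Word.
Variable T : eqType.

Definition oriB (W : seq T) x y :=
  all (fun i => count_mem y (take i W) <= count_mem x (take i W) <= (count_mem y (take i W)).+1)
      (iota 0 (size W).+1).
Definition ori (W : seq T) x y := forall P Q, W = P ++ Q ->
  count_mem y P <= count_mem x P <= (count_mem y P).+1.

Lemma oriBP W x y : oriB W x y <-> ori W x y.
Proof.
split.
  move=> /allP H P Q eW.
  have := H (size P); rewrite mem_iota eW size_cat add0n ltnS leq_addr.
  by rewrite take_size_cat //; apply.
move=> H; apply/allP => i _; apply: (H _ (drop i W)); by rewrite cat_take_drop.
Qed.

Lemma ori_refl W x : oriB W x x.
Proof. by apply/allP => i _; rewrite leqnn leqnSn. Qed.

Definition alt (a b : T) m := [seq (if odd i then b else a) | i <- iota 0 m].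

Lemma altS a b m : alt a b m.+1 = a :: alt b a m.
Proof.
rewrite /alt /= -[1]/(1 + 0) iotaDl -map_comp; congr (_ :: _).
by apply: eq_map => i /=; case: (odd i).
Qed.

Lemma alt_rcons a b m : alt a b m.+1 = rcons (alt a b m) (if odd m then b else a).
Proof. by rewrite /alt -addn1 iotaD map_cat cats1. Qed.

Lemma alt_count m : forall a b, a != b ->
  count_mem a (alt a b m) = uphalf m /\ count_mem b (alt a b m) = half m.
Proof.
elim: m => [|m IH] a b ab //.
rewrite altS /= eqxx (negbTE ab).
have ba : b != a by rewrite eq_sym.
have [h1 h2] := IH b a ba.
by rewrite h1 h2.
Qed.

Lemma alt_take a b k m : take k (alt a b m) = alt a b (minn k m).
Proof. by rewrite /alt -map_take take_iota. Qed.

Lemma count_filter_p (p : pred T) z s : p z -> count_mem z (filter p s) = count_mem z s.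
Proof.
move=> pz; rewrite count_filter; apply: eq_count => w /=.
by case: eqP => // ->; rewrite pz.
Qed.

Definition pxy (x y : T) := fun z => (z == x) || (z == y).

Lemma L1 W x y : x != y -> alternate W x y -> oriB W x y || oriB W y x.
Proof.
move=> xy [_ [_ [a [b [hab hs]]]]]; cbv zeta in hs.
set p := (fun z : T => (z == x) || (z == y)) in hs.
have pa : p a && p b.
  by rewrite /p; case/orP: hab => /andP[/eqP-> /eqP->]; rewrite !eqxx ?orbT.
have ab : a != b.
  by case/orP: hab => /andP[/eqP-> /eqP->] //; rewrite eq_sym.
have key : ori W a b.
  move=> P Q eW.
  have hf : filter p W = filter p P ++ filter p Q by rewrite eW filter_cat.
  have : filter p P = alt a b (minn (size (filter p P)) (size (filter p W))).
    by rewrite -alt_take /alt -hs hf take_size_cat.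
  set k := minn _ _ => hP.
  case/andP: pa => pa pb.
  rewrite -(count_filter_p P pa) -(count_filter_p P pb) hP.
  have [-> ->] := alt_count k ab.
  rewrite uphalf_half; case: (odd k) => /=; lia.
case/orP: hab => /andP[/eqP ea /eqP eb]; move: key; rewrite -ea -eb -oriBP => ->.
  by [].
by rewrite orbT.
Qed.

Lemma L2f W x y : x != y -> ori W x y ->
  filter (pxy x y) W = alt x y (size (filter (pxy x y) W)).
Proof.
move=> xy; elim/last_ind: W => [|W z IH] H //.
have H' : ori W x y.
  by move=> P Q e; apply: (H P (rcons Q z)); rewrite e rcons_cat.
have {IH} IHe := IH H'.
set m := size (filter (pxy x y) W) in IHe.
have px : pxy x y x by rewrite /pxy eqxx.
have py : pxy x y y by rewrite /pxy eqxx orbT.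
have cx : count_mem x W = uphalf m.
  by rewrite -(count_filter_p W px) IHe (alt_count m xy).1.
have cy : count_mem y W = half m.
  by rewrite -(count_filter_p W py) IHe (alt_count m xy).2.
have hc := H (rcons W z) [::] (esym (cats0 _)).
rewrite -cats1 !count_cat cx cy /= addn0 in hc.
rewrite filter_rcons.
case pz: (pxy x y z); last by [].
have sa : size (alt x y m) = m by rewrite size_map size_iota.
rewrite size_rcons IHe sa alt_rcons; move: pz; rewrite /pxy => /orP [] /eqP ez; subst z.
  rewrite eqxx (negbTE xy) uphalf_half in hc.
  by case: (odd m) hc => //= hc; exfalso; lia.
have yx : y != x by rewrite eq_sym.
rewrite eqxx (negbTE yx) uphalf_half in hc.
by case: (odd m) hc => //= hc; exfalso; lia.
Qed.

Lemma L2 W x y : x != y -> x \in W -> y \in W -> oriB W x y -> alternate W x y.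
Proof.
move=> xy xW yW /oriBP H; split => //; split => //; exists x, y; split.
  by rewrite !eqxx.
exact: (L2f xy H).
Qed.

Lemma L3 W x y : x != y -> x \in W -> oriB W x y -> oriB W y x -> False.
Proof.
move=> xy xW /oriBP h1 /oriBP h2.
have e1 := L2f xy h1.
have yx : y != x by rewrite eq_sym.
have e2 := L2f yx h2.
have ef : filter (pxy y x) W = filter (pxy x y) W.
  by apply: eq_filter => z; rewrite /pxy orbC.
rewrite ef in e2.
have : x \in filter (pxy x y) W by rewrite mem_filter /pxy eqxx xW.
move: e1 e2; case: (size _) => [|k] -> //.
rewrite !altS => [[]] /eqP; by rewrite (negbTE xy).
Qed.

Lemma L4 W a b c : a != b -> a \in W -> oriB W a b -> oriB W b c -> oriB W c a -> False.
Proof.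
move=> ab aW hab /oriBP hbc /oriBP hca; apply: (L3 ab aW hab).
apply/oriBP => P Q e; move/oriBP: hab => hab.
have := hab P Q e; have := hbc P Q e; have := hca P Q e; lia.
Qed.

Lemma L5 W a b c d : oriB W a b -> oriB W b c -> oriB W c d -> oriB W a d ->
  oriB W a c && oriB W b d.
Proof.
move=> /oriBP h1 /oriBP h2 /oriBP h3 /oriBP h4.
apply/andP; split; apply/oriBP => P Q e;
have := h1 P Q e; have := h2 P Q e; have := h3 P Q e; have := h4 P Q e; lia.
Qed.

End Word.

Lemma prok : all (fun k => [&& (pr k).1 < 5, (pr k).2 < 5 & (pr k).1 != (pr k).2]) V7.
Proof. by vm_compute. Qed.

Definition memp (x : nat) (p : nat * nat) := (x == p.1) || (x == p.2).
Lemma distN : all (fun i => all (fun j => (i != j) ==>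
  ~~ (memp (pr i).1 (pr j) && memp (pr i).2 (pr j))) V7) V7.
Proof. by vm_compute. Qed.

Lemma inter2 (T : finType) (a b c d : T) :
  ([set a; b] :&: [set c; d] != set0) = [|| a == c, a == d, b == c | b == d].
Proof.
apply/set0Pn/idP.
  case=> x /setIP[]; rewrite !inE => /orP[]/eqP-> /orP[]/eqP->; by rewrite eqxx ?orbT.
case/or4P => /eqP e; [exists a | exists a | exists b | exists b];
  by rewrite !inE e !eqxx ?orbT.
Qed.

Theorem theorem3 (n : nat) : 5 <= n -> ~ representable (line_rel (K_rel n)).
Proof.
case: n => [//|m] hm [W [Wall Wrep]].
pose vo (k : nat) : 'I_m.+1 := inord k.
have voE : forall a c, a < 5 -> c < 5 -> (vo a == vo c) = (a == c).
  move=> a c ha hc; rewrite -val_eqE /= !inordK //.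
    exact: leq_trans hc hm.
  exact: leq_trans ha hm.
have isE : forall a b, a < 5 -> b < 5 -> a != b -> is_edge (K_rel m.+1) [set vo a; vo b].
  move=> a b ha hb ab; apply/existsP; exists (vo a); apply/existsP; exists (vo b).
  by rewrite /K_rel voE // ab eqxx.
pose e0 : edge_type (K_rel m.+1) := exist (fun A => is_edge (K_rel m.+1) A) _ (isE 0 1 erefl erefl erefl).
pose E (k : nat) := insubd e0 [set vo (pr k).1; vo (pr k).2].
have prk : forall k, k < 7 -> [/\ (pr k).1 < 5, (pr k).2 < 5 & (pr k).1 != (pr k).2].
  by move=> k hk; have := allP prok k; rewrite mem_iota hk => /(_ isT) /and3P.
have valE : forall k, k < 7 -> val (E k) = [set vo (pr k).1; vo (pr k).2].
  move=> k hk; have [h1 h2 h3] := prk k hk.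
  by rewrite /E insubdK //; exact: (isE _ _ h1 h2 h3).
have dist : forall i j, i < 7 -> j < 7 -> i != j -> E i != E j.
  move=> i j hi hj ij; apply/negP => /eqP eij.
  have [a1 a2 a3] := prk i hi; have [b1 b2 b3] := prk j hj.
  have m1 : vo (pr i).1 \in val (E j) by rewrite -eij valE // !inE eqxx.
  have m2 : vo (pr i).2 \in val (E j) by rewrite -eij valE // !inE eqxx orbT.
  rewrite valE // !inE !voE // in m1 m2.
  have := allP distN i; rewrite mem_iota hi => /(_ isT) /allP /(_ j).
  by rewrite mem_iota hj ij /memp m1 m2 => /(_ isT).
have lineE : forall i j, i < 7 -> j < 7 -> i != j -> line_rel (K_rel m.+1) (E i) (E j) = shareN i j.
  move=> i j hi hj ij.
  have [a1 a2 a3] := prk i hi; have [b1 b2 b3] := prk j hj.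
  by rewrite /line_rel dist //= valE // valE // inter2 !voE.
pose o i j := oriB W (E i) (E j).
apply: (finite_contra (o := o)).
- by move=> i; apply: ori_refl.
- move=> i j hi hj /andP[ij sh]; apply: L1; first exact: dist.
  by apply/(Wrep _ _ (dist _ _ hi hj ij)); rewrite lineE.
- move=> i j hi hj ij nadj; apply/negP => ho.
  have := L2 (dist _ _ hi hj ij) (Wall _) (Wall _) ho.
  move/(Wrep _ _ (dist _ _ hi hj ij)); rewrite lineE // => sh.
  by move: nadj; rewrite /adjN ij sh.
- move=> i j hi hj ij; apply/negP => /andP[h1 h2].
  exact: (L3 (dist _ _ hi hj ij) (Wall _) h1 h2).
- move=> a b c ha hb hc ab h1 h2 h3.
  exact: (L4 (dist _ _ ha hb ab) (Wall _) h1 h2 h3).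
- move=> a b c d; exact: L5.
Qed.
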